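(* Let $M$ be a finite set of alternatives, $\mathcal{R}$ the set of all weak preference orders on $M$, and $\varphi:\mathcal{R}\to\Delta(M)$ a deterministic mechanism, i.e., for every $R\in\mathcal{R}$ the lottery $\varphi(R)$ puts probability $1$ on a single alternative. Then $\varphi$ is strategyproof if and only if it is separation monotonic.
   Context: A preference order is a complete, transitive binary relation $R$ on $M$; $a\,I\,b$ means $a\,R\,b$ and $b\,R\,a$, $a\,P\,b$ means $a\,R\,b$ but not $b\,R\,a$. Every preference order is written $M_1\,P\,\cdots\,P\,M_K$ with $(M_k)$ the partition of $M$ into nonempty indifference classes, ordered so that $a\,P\,b$ whenever $a\in M_k$, $b\in M_{k'}$, $k<k'$. A mechanism is a map $\varphi:\mathcal{R}\to\Delta(M)$; for $A\subseteq M$, $\varphi_A(R)=\sum_{a\in A}(\varphi(R))_a$. A lottery $x$ first order-stochastically dominates $y$ at $R$ if $\sum_{j:\, j R a}x_j\ge\sum_{j:\, j R a}y_j$ for every $a\in M$. $\varphi$ is strategyproof if for all $R,R'\in\mathcal{R}$, $\varphi(R)$ first order-stochastically dominates $\varphi(R')$ at $R$. A separation is a pair $(R,R')$ such that, with $R=M_1\,P\,\cdots\,P\,M_K$, there are $\kappa\in\{1,\dots,K\}$ and a partition of $M_\kappa$ into disjoint nonempty $M_\kappa^1,M_\kappa^2$ with $R'=M_1\,P'\,\cdots\,P'\,M_{\kappa-1}\,P'\,M_\kappa^1\,P'\,M_\kappa^2\,P'\,M_{\kappa+1}\,P'\,\cdots\,P'\,M_K$ (indifference within each listed set). $\varphi$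 is separation monotonic if for every separation $(R,R')$: (responsiveness) $\varphi_{M_\kappa^1}(R')\ge\varphi_{M_\kappa^1}(R)$ and $\varphi_{M_\kappa^2}(R')\le\varphi_{M_\kappa^2}(R)$; and (directness) if $\varphi_{M_k}(R)\ne\varphi_{M_k}(R')$ for some $k\in\{1,\dots,K\}$, then $\varphi_{M_\kappa^1}(R')\ne\varphi_{M_\kappa^1}(R)$ and $\varphi_{M_\kappa^2}(R')\ne\varphi_{M_\kappa^2}(R)$. *)

(* Defs.v *)
From HB Require Import structures.
From mathcomp Require Import all_boot all_order all_algebra.
Set Implicit Arguments. Unset Strict Implicit. Unset Printing Implicit Defensive.
Import Order.TTheory GRing.Theory Num.Theory.
Local Open Scope ring_scope.

(* A binary relation on the finite set M of alternatives, encoded as a finite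
   function so that equality of relations is extensional. [rel_of r a b] means a R b. *)
Definition prel (M : finType) := {ffun M * M -> bool}.
Definition rel_of (M : finType) (r : prel M) (a b : M) : bool := r (a, b).

Definition complete_rel (M : finType) (r : prel M) : Prop :=
  forall a b : M, rel_of r a b || rel_of r b a.
Definition transitive_rel (M : finType) (r : prel M) : Prop :=
  forall a b c : M, rel_of r a b -> rel_of r b c -> rel_of r a c.
Definition is_pref (M : finType) (r : prel M) : Prop :=
  complete_rel r /\ transitive_rel r.

Definition indiff (M : finType) (r : prel M) (a b : M) : bool :=
  rel_of r a b && rel_of r b a.

Definition indiff_class (M : finType) (r : prel M) (C : {set M}) : Prop :=
  exists a : M, C = [set b | indiff r a b].

Definition is_lottery (R : realFieldType) (M : finType) (x : {ffun M -> R}) : Prop :=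
  (forall a, 0 <= x a) /\ \sum_(a : M) x a = 1.

(* A mechanism phi : prel M -> {ffun M -> R}, only its values on preference
   orders matter; it maps each preference order to a lottery. *)
Definition is_mechanism (R : realFieldType) (M : finType)
    (phi : prel M -> {ffun M -> R}) : Prop :=
  forall r : prel M, is_pref r -> is_lottery (phi r).

Definition deterministic (R : realFieldType) (M : finType)
    (phi : prel M -> {ffun M -> R}) : Prop :=
  forall r : prel M, is_pref r -> exists a : M, phi r a = 1.

Definition mass (R : realFieldType) (M : finType) (x : {ffun M -> R}) (A : {set M}) : R :=
  \sum_(a in A) x a.

Definition fosd (R : realFieldType) (M : finType) (r : prel M) (x y : {ffun M -> R}) : Prop :=
  forall a : M, \sum_(j | rel_of r j a) y j <= \sum_(j | rel_of r j a) x j.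

Definition strategyproof (R : realFieldType) (M : finType)
    (phi : prel M -> {ffun M -> R}) : Prop :=
  forall r r' : prel M, is_pref r -> is_pref r' -> fosd r (phi r) (phi r').

(* Given r and a partition C1, C2 of an indifference class M_kappa of r, the relation
   r' = M_1 P' ... P' M_kappa^1 P' M_kappa^2 P' ... P' M_K : r' agrees with r
   unless both alternatives lie in M_kappa, in which case a r' b iff
   a in M_kappa^1 or b in M_kappa^2. *)
Definition separate (M : finType) (r : prel M) (C1 C2 : {set M}) : prel M :=
  [ffun p : M * M =>
     if (p.1 \in C1 :|: C2) && (p.2 \in C1 :|: C2)
     then (p.1 \in C1) || (p.2 \in C2)
     else r p].

Definition separation (M : finType) (r r' : prel M) (C1 C2 : {set M}) : Prop :=
  [/\ is_pref r, indiff_class r (C1 :|: C2), [disjoint C1 & C2],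
      (C1 != set0) && (C2 != set0) & r' = separate r C1 C2].

Definition separation_monotonic (R : realFieldType) (M : finType)
    (phi : prel M -> {ffun M -> R}) : Prop :=
  forall (r r' : prel M) (C1 C2 : {set M}), separation r r' C1 C2 ->
    (mass (phi r) C1 <= mass (phi r') C1 /\ mass (phi r') C2 <= mass (phi r) C2) /\
    ((exists C : {set M}, indiff_class r C /\ mass (phi r) C != mass (phi r') C) ->
       mass (phi r') C1 != mass (phi r) C1 /\ mass (phi r') C2 != mass (phi r) C2).

(* Main.v *)
Require Import Defs.
From HB Require Import structures.
From mathcomp Require Import all_boot all_order all_algebra.
From mathcomp Require Import zify.
Set Implicit Arguments. Unset Strict Implicit. Unset Printing Implicit Defensive.
Import Order.TTheory GRing.Theory Num.Theory.
Local Open Scope ring_scope.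

Definition ind (R : realFieldType) (M : finType) (x : {ffun M -> R}) (a : M) :=
  forall w, x w = (w == a)%:R.

Lemma sum_ind (R : realFieldType) (M : finType) (P : pred M) (a : M) :
  \sum_(j | P j) ((j == a)%:R : R) = (P a)%:R.
Proof.
case Pa: (P a).
  rewrite (bigD1 a) //= eqxx big1 ?addr0 // => j /andP[_ /negbTE ->] //.
rewrite big1 // => j Pj; case: eqP => // ej; by rewrite ej Pa in Pj.
Qed.

Lemma mass_ind (R : realFieldType) (M : finType) (x : {ffun M -> R}) a A :
  ind x a -> mass x A = (a \in A)%:R.
Proof. by move=> H; rewrite /mass (eq_bigr _ (fun w _ => H w)) sum_ind. Qed.

Lemma get_ind (R : realFieldType) (M : finType) (phi : prel M -> {ffun M -> R}) r :
  is_mechanism phi -> deterministic phi -> is_pref r -> exists a, ind (phi r) a.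
Proof.
move=> Hm Hd Hr; have [a Ha] := Hd r Hr; exists a.
have [H0 H1] := Hm r Hr.
move: H1; rewrite (bigD1 a) //= Ha -{2}(addr0 1) => /addrI H.
have := (psumr_eq0P (fun i _ => H0 i) H) => Hz w.
case: eqP => [->|/eqP nw]; first by rewrite Ha.
by rewrite Hz.
Qed.

Lemma ind_inj (R : realFieldType) (M : finType) (x : {ffun M -> R}) a b :
  ind x a -> ind x b -> a = b.
Proof.
move=> Ha Hb; have := Hb a; rewrite Ha eqxx; case: eqP => // _ /eqP.
by rewrite eqr_nat.
Qed.

Lemma refl_pref (M : finType) (r : prel M) a : is_pref r -> rel_of r a a.
Proof. by case=> c _; have := c a a; rewrite orbb. Qed.

Lemma indiff_refl (M : finType) (r : prel M) a : is_pref r -> indiff r a a.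
Proof. by move=> H; rewrite /indiff refl_pref. Qed.

Lemma indiff_sym (M : finType) (r : prel M) a b : indiff r a b = indiff r b a.
Proof. by rewrite /indiff andbC. Qed.

Lemma indiff_trans (M : finType) (r : prel M) a b c : is_pref r ->
  indiff r a b -> indiff r b c -> indiff r a c.
Proof.
case=> _ t /andP[h1 h2] /andP[h3 h4]; apply/andP; split; [exact: t h1 h3| exact: t h4 h2].
Qed.

Lemma sepE (M : finType) (r : prel M) C1 C2 u v :
  rel_of (separate r C1 C2) u v =
  if (u \in C1 :|: C2) && (v \in C1 :|: C2) then (u \in C1) || (v \in C2) else rel_of r u v.
Proof. by rewrite /rel_of /separate ffunE. Qed.

Lemma class_rel (M : finType) (r : prel M) (C : {set M}) z u v : is_pref r ->
  C = [set y | indiff r z y] -> u \in C -> v \in C -> indiff r u v.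
Proof.
move=> Hr -> ; rewrite !inE => h1 h2; apply: indiff_trans Hr _ h2.
by rewrite indiff_sym.
Qed.

Lemma class_closed (M : finType) (r : prel M) (C : {set M}) z u v : is_pref r ->
  C = [set y | indiff r z y] -> u \in C -> indiff r u v -> v \in C.
Proof.
move=> Hr -> ; rewrite !inE => h1 h2; exact: indiff_trans Hr h1 h2.
Qed.

Lemma sep_sub (M : finType) (r : prel M) C1 C2 z u v : is_pref r ->
  C1 :|: C2 = [set y | indiff r z y] ->
  rel_of (separate r C1 C2) u v -> rel_of r u v.
Proof.
move=> Hr HC; rewrite sepE; case: ifP => // /andP[hu hv] _.
by case/andP: (class_rel Hr HC hu hv).
Qed.

Lemma sep_pref (M : finType) (r : prel M) C1 C2 z : is_pref r ->
  C1 :|: C2 = [set y | indiff r z y] -> [disjoint C1 & C2] ->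
  is_pref (separate r C1 C2).
Proof.
move=> Hr HC Hd; have dj y : y \in C1 -> y \in C2 -> False.
  by move=> h1; rewrite (disjointFr Hd h1).
split.
  move=> u v; rewrite !sepE (andbC (v \in _)); case: ifP => [/andP[hu hv]|_].
    by move: hu hv; rewrite !inE; case: (u \in C1); case: (v \in C1); case: (v \in C2).
  by case: Hr => c _; exact: c.
move=> x y w hxy hyw.
have rxy := sep_sub Hr HC hxy; have ryw := sep_sub Hr HC hyw.
rewrite sepE; case: ifP => [/andP[hx hw]|_]; last by case: Hr => _ t; exact: t rxy ryw.
case hy: (y \in C1 :|: C2).
  move: hxy hyw; rewrite !sepE hx hw hy /=.
  move: hy; rewrite inE => /orP[hy1|hy2].
    have := dj y hy1; case: (y \in C2) => [F|_]; first by case: F.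
    by rewrite hy1 /=; case: (x \in C1); case: (w \in C2).
  rewrite hy2 orbT /=.
  case hy1: (y \in C1); first by case: (dj y hy1 hy2).
  by case: (x \in C1); case: (w \in C2).
exfalso; move: hy => /negbT/negP; apply.
apply: (class_closed Hr HC hx); apply/andP; split => //.
have [_ t] := Hr; apply: t ryw _.
by case/andP: (class_rel Hr HC hw hx).
Qed.

Lemma natb_le (b1 b2 : bool) : ((b1 : nat) <= b2)%N -> b1 -> b2.
Proof. by case: b1; case: b2. Qed.

Lemma local_sm (R : realFieldType) (M : finType) (phi : prel M -> {ffun M -> R})
  c c' C1 C2 a b :
  separation_monotonic phi -> separation c c' C1 C2 ->
  ind (phi c) a -> ind (phi c') b ->
  [/\ indiff c a b, (a \in C1) -> (b \in C1) & (b \in C2) -> (a \in C2)].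
Proof.
move=> SM Hs Ha Hb; have [[r1 r2] dir] := SM _ _ _ _ Hs.
case: Hs => Hc [z HC] Hd _ _.
rewrite !(mass_ind _ Ha) !(mass_ind _ Hb) !ler_nat in r1 r2 dir.
have L2 := natb_le r1; have L3 := natb_le r2.
split => //.
case E: (indiff c a b) => //; exfalso.
have [] := dir.
  exists [set y | indiff c a y]; split; first by exists a.
  by rewrite (mass_ind _ Ha) (mass_ind _ Hb) !inE indiff_refl // E eqr_nat.
rewrite !eqr_nat => n1 n2.
have L2b : (a \in C1) ==> (b \in C1) by apply/implyP.
have L3b : (b \in C2) ==> (a \in C2) by apply/implyP.
have ha : a \in C1 :|: C2.
  by rewrite inE; move: n1 n2 L2b L3b; case: (a \in C1); case: (b \in C1);
     case: (a \in C2); case: (b \in C2).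
have hb : b \in C1 :|: C2.
  by rewrite inE; move: n1 n2 L2b L3b; case: (a \in C1); case: (b \in C1);
     case: (a \in C2); case: (b \in C2).
by rewrite (class_rel Hc HC ha hb) in E.
Qed.

Lemma fosd_ind (R : realFieldType) (M : finType) (r : prel M) (x y : {ffun M -> R}) a b :
  is_pref r -> ind x a -> ind y b -> (fosd r x y <-> rel_of r a b).
Proof.
move=> Hr Ha Hb; rewrite /fosd; split.
  move=> /(_ b); rewrite (eq_bigr _ (fun w _ => Ha w)) (eq_bigr _ (fun w _ => Hb w)).
  by rewrite !sum_ind ler_nat refl_pref //; case: (rel_of r a b).
move=> rab c; rewrite (eq_bigr _ (fun w _ => Ha w)) (eq_bigr _ (fun w _ => Hb w)).
rewrite !sum_ind ler_nat; case rbc: (rel_of r b c) => //.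
by have [_ t] := Hr; rewrite (t _ _ _ rab rbc).
Qed.

Lemma sp_sm (R : realFieldType) (M : finType) (phi : prel M -> {ffun M -> R}) :
  is_mechanism phi -> deterministic phi ->
  strategyproof phi -> separation_monotonic phi.
Proof.
move=> Hm Hdet SP r r' C1 C2 Hs.
have [Hr [z HC] Hd Hne Hr'] := Hs.
have Hp' : is_pref r' by rewrite Hr'; exact: sep_pref Hr HC Hd.
have [a Ha] := get_ind Hm Hdet Hr; have [b Hb] := get_ind Hm Hdet Hp'.
have rab : rel_of r a b by apply/(fosd_ind Hr Ha Hb)/SP.
have rba' : rel_of r' b a by apply/(fosd_ind Hp' Hb Ha)/SP.
have dj y : y \in C1 -> y \in C2 -> False.
  by move=> h1; rewrite (disjointFr Hd h1).
have iab : indiff r a b.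
  case hab: ((b \in C1 :|: C2) && (a \in C1 :|: C2)).
    by case/andP: hab => hb ha; exact: class_rel Hr HC ha hb.
  by move: rba'; rewrite Hr' sepE hab => rba; rewrite /indiff rab.
have ab_mem (C : {set M}) : indiff_class r C -> (a \in C) = (b \in C).
  case=> w ->; rewrite !inE; apply/idP/idP => h.
    exact: indiff_trans Hr h iab.
  by apply: indiff_trans Hr h _; rewrite indiff_sym.
rewrite !(mass_ind _ Ha) !(mass_ind _ Hb) !ler_nat.
split.
  have hab : (a \in C1 :|: C2) = (b \in C1 :|: C2) by apply: ab_mem; exists z.
  move: rba'; rewrite Hr' sepE -hab andbb.
  split.
    case a1: (a \in C1) => //.
    have ain : a \in C1 :|: C2 by rewrite inE a1.
    move: rba'; rewrite ain; case: (b \in C1) => //=.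
    by have := dj a a1; case: (a \in C2) => // F; case: F.
  case b2: (b \in C2); last by [].
  have hb : b \in C1 :|: C2 by rewrite inE b2 orbT.
  move: rba'; rewrite hab hb; case b1: (b \in C1); first by case: (dj b b1 b2).
  by move=> /= ->.
by case=> C [HCl]; rewrite (mass_ind _ Ha) (mass_ind _ Hb) (ab_mem C HCl) eqxx.
Qed.

Lemma lemR (R : realFieldType) (M : finType) (phi : prel M -> {ffun M -> R})
  (c' : prel M) b :
  is_mechanism phi -> deterministic phi -> separation_monotonic phi ->
  is_pref c' -> ind (phi c') b ->
  forall n (c : prel M) a, (#|[set p : M * M | c p && ~~ c' p]| <= n)%N ->
  is_pref c -> (forall u v, rel_of c' u v -> rel_of c u v) ->
  ind (phi c) a -> indiff c a b.
Proof.
move=> Hm Hdet SM Hc' Hb n; elim: n => [|n IH] c a Hn Hc Hsub Ha.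
  have E : c = c'.
    apply/ffunP => -[u v]; have := Hsub u v; rewrite /rel_of.
    have /cards0_eq/setP/(_ (u, v)) : #|[set p : M * M | c p && ~~ c' p]| = 0%N.
      by apply/eqP; rewrite -leqn0.
    by rewrite !inE; case: (c (u, v)); case: (c' (u, v)) => //= _ ->.
  subst c; rewrite (ind_inj Ha Hb); exact: indiff_refl.
case: (boolP ([set p : M * M | c p && ~~ c' p] == set0)) => [/eqP E0|].
  have E : c = c'.
    apply/ffunP => -[u v]; have := Hsub u v; rewrite /rel_of.
    move/setP: E0 => /(_ (u, v)).
    by rewrite !inE; case: (c (u, v)); case: (c' (u, v)) => //= _ ->.
  subst c; rewrite (ind_inj Ha Hb); exact: indiff_refl.
case/set0Pn => -[y z]; rewrite inE => /andP[cyz ncyz].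
have c'zy : rel_of c' z y.
  by have [cc _] := Hc'; have := cc y z; rewrite /rel_of (negbTE ncyz).
have czy := Hsub _ _ c'zy.
set C := [set w | indiff c z w].
set C1 := [set w in C | rel_of c' w z].
set C2 := [set w in C | ~~ rel_of c' w z].
have HC : C1 :|: C2 = [set w | indiff c z w].
  by apply/setP => w; rewrite !inE; case: (indiff c z w); case: (rel_of c' w z).
have Hd : [disjoint C1 & C2].
  rewrite -setI_eq0; apply/eqP/setP => w; rewrite !inE.
  by case: (indiff c z w); case: (rel_of c' w z).
have z1 : z \in C1 by rewrite !inE indiff_refl // refl_pref.
have y2 : y \in C2 by rewrite !inE /indiff czy /rel_of cyz.
set d := separate c C1 C2.
have Hsep : separation c d C1 C2.
  split => //; first by exists z.
  by apply/andP; split; apply/set0Pn; [exists z | exists y].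
have Hdp : is_pref d by exact: sep_pref Hc HC Hd.
have [e He] := get_ind Hm Hdet Hdp.
have [iae _ _] := local_sm SM Hsep Ha He.
have sub' : forall u v, rel_of c' u v -> rel_of d u v.
  move=> u v cuv; rewrite /d sepE; case: ifP => [/andP[hu hv]|_]; last exact: Hsub.
  rewrite HC !inE in hu hv; rewrite !inE hu hv /=.
  case cuz: (rel_of c' u z) => //=; apply/negP => cvz.
  by have [_ t] := Hc'; rewrite (t _ _ _ cuv cvz) in cuz.
have Hcard : (#|[set p : M * M | d p && ~~ c' p]| <= n)%N.
  have : [set p : M * M | d p && ~~ c' p] \proper [set p : M * M | c p && ~~ c' p].
    apply/properP; split.
      apply/subsetP => -[u v]; rewrite !inE => /andP[dp ->]; rewrite andbT.
      exact: (sep_sub Hc HC dp).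
    exists (y, z); first by rewrite inE cyz.
    rewrite inE negb_and; apply/orP; left.
    have : ~~ rel_of d y z.
      rewrite /d sepE HC !inE (indiff_refl _ Hc) /indiff czy /rel_of cyz /=.
      by apply/norP; split => //; rewrite negbK; exact: (refl_pref z Hc').
    by [].
  by move/proper_card => h; rewrite -ltnS; exact: leq_trans h Hn.
have ieb := IH d e Hcard Hdp sub' He.
apply: (indiff_trans Hc iae).
by case/andP: ieb => h1 h2; apply/andP; split; exact: (sep_sub Hc HC).
Qed.

Lemma lemR' (R : realFieldType) (M : finType) (phi : prel M -> {ffun M -> R})
  (c c' : prel M) a b :
  is_mechanism phi -> deterministic phi -> separation_monotonic phi ->
  is_pref c -> is_pref c' -> (forall u v, rel_of c' u v -> rel_of c u v) ->
  ind (phi c) a -> ind (phi c') b -> indiff c a b.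
Proof.
move=> Hm Hd SM Hc Hc' Hs Ha Hb.
exact: (lemR Hm Hd SM Hc' Hb (leqnn _) Hc Hs Ha).
Qed.

Definition rk (M : finType) (f : M -> nat) : prel M := [ffun p => (f p.1 <= f p.2)%N].

Lemma rkE (M : finType) (f : M -> nat) u v : rel_of (rk f) u v = (f u <= f v)%N.
Proof. by rewrite /rel_of ffunE. Qed.

Lemma rk_pref (M : finType) (f : M -> nat) : is_pref (rk f).
Proof.
split => [u v|u v w]; rewrite !rkE; first exact: leq_total.
exact: leq_trans.
Qed.

Lemma indiff_rk (M : finType) (f : M -> nat) u v : indiff (rk f) u v = (f u == f v).
Proof. by rewrite /indiff !rkE eqn_leq. Qed.

Lemma pref_rank (M : finType) (q : prel M) :
  is_pref q -> q = rk (fun y => #|[set w | ~~ rel_of q y w]|).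
Proof.
move=> [cq tq]; apply/ffunP => -[y z]; rewrite ffunE /=.
rewrite -/(rel_of q y z); case qyz: (rel_of q y z).
  apply/esym/subset_leq_card/subsetP => w; rewrite !inE; apply: contra => qzw.
  exact: tq qyz qzw.
have qzy : rel_of q z y by have := cq y z; rewrite qyz.
apply/esym/negbTE; rewrite -ltnNge; apply: proper_card; apply/properP; split.
  apply/subsetP => w; rewrite !inE; apply: contra => qyw; exact: tq qzy qyw.
exists z; first by rewrite inE qyz.
by rewrite inE negbK; have := cq z z; rewrite orbb.
Qed.

Lemma rk_sep (M : finType) (f g : M -> nat) (C1 C2 : {set M}) a :
  C1 :|: C2 = [set w | f w == f a] -> [disjoint C1 & C2] -> C1 != set0 -> C2 != set0 ->
  (forall u v, (g u <= g v)%N =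
     (if (f u == f a) && (f v == f a) then (u \in C1) || (v \in C2) else (f u <= f v)%N)) ->
  separation (rk f) (rk g) C1 C2.
Proof.
move=> HC Hd n1 n2 Hg; split => //; first exact: rk_pref.
  by exists a; rewrite HC; apply/setP => w; rewrite !inE indiff_rk eq_sym.
by rewrite n1 n2.
apply/ffunP => -[u v]; rewrite /separate !ffunE /= HC !inE Hg; case: ifP => // _; rewrite ffunE.
Qed.

Ltac crunch x u v :=
  case: (eqVneq u x) => [eu|hu]; try subst u; case: (eqVneq v x) => [ev|hv]; try subst v;
  rewrite ?eqxx /=; repeat (case: ifPn => ?); rewrite /=; lia.

Lemma sm_sp_rank (R : realFieldType) (M : finType) (phi : prel M -> {ffun M -> R})
  (fr fq : M -> nat) t x :
  is_mechanism phi -> deterministic phi -> separation_monotonic phi ->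
  ind (phi (rk fr)) t -> ind (phi (rk fq)) x -> (fr t <= fr x)%N.
Proof.
move=> Hm Hd SM Ht Hx.
have gi f := get_ind Hm Hd (rk_pref f).
have LR f g a b : (forall u v, (g u <= g v)%N -> (f u <= f v)%N) ->
    ind (phi (rk f)) a -> ind (phi (rk g)) b -> f a = f b.
  move=> H Ha Hb; apply/eqP; rewrite -indiff_rk.
  apply: (lemR' Hm Hd SM (rk_pref _) (rk_pref _) _ Ha Hb) => u v; rewrite !rkE; exact: H.
pose k := fq x.
pose f2 := fun y => ((fq y).*2 + (y != x))%N.
have [x2 Hx2] := gi f2.
have ex2 : x2 = x.
  pose C2 := [set y | (fq y == k) && (y != x)].
  case: (boolP (C2 == set0)) => [/eqP C20|C2n].
    have e : fq x = fq x2.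
      apply: (LR fq f2 x x2 _ Hx Hx2).
      move=> u v; rewrite /f2; case: (u != x); case: (v != x); rewrite /=; lia.
    have : x2 \notin C2 by rewrite C20 inE.
    rewrite !inE negb_and negbK -/k /k e eqxx /=; exact/eqP.
  have Hs : separation (rk fq) (rk f2) [set x] C2.
    apply: (rk_sep (a := x)).
    - by apply/setP => w; rewrite !inE; case: (eqVneq w x) => [->|]; rewrite ?eqxx ?andbT ?orbF //= orbF.
    - rewrite -setI_eq0; apply/eqP/setP => w; rewrite !inE.
      by case: (eqVneq w x); rewrite ?andbF ?andbT ?andbF.
    - by apply/set0Pn; exists x; rewrite inE.
    - done.
    move=> u v; rewrite !inE /f2 /=.
    case: (eqVneq u x) => [->|hu]; case: (eqVneq v x) => [->|hv];
    rewrite ?eqxx /= ?andbT ?andbF;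
    rewrite /k; repeat (case: ifPn => ?); rewrite /=; (try by []); apply/idP/idP; lia.
  have [_ L2 _] := local_sm SM Hs Hx Hx2.
  by apply/eqP; rewrite -in_set1; apply: L2; rewrite inE.
subst x2.
pose fh := fun y => if y == x then 1%N else if (f2 y < f2 x)%N then 0%N else 2%N.
have [xh Hxh] := gi fh.
have exh : xh = x.
  have e : fh xh = fh x.
    apply: (LR fh f2 xh x _ Hxh Hx2).
    move=> u v; rewrite /fh /f2 /=; crunch x u v.
  move: e; rewrite /fh /f2 /=; case: (eqVneq xh x) => [//|_]; rewrite eqxx /=.
  by case: ifP.
subst xh.
pose fx := fun y => nat_of_bool (y != x).
have [xr Hxr] := gi fx.
have exr : xr = x.
  pose A := [set y | (f2 y < f2 x)%N].
  case: (boolP (A == set0)) => [/eqP A0|An].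
    have nA y : ~~ (f2 y < f2 x)%N.
      apply/negP => h; have hA : y \in A by rewrite inE.
      by rewrite A0 inE in hA.
    have e : fx xr = fx x.
      apply: (LR fx fh xr x _ Hxr Hxh).
      move=> u v; move: (nA u) (nA v); rewrite /fh /fx /f2 /=; crunch x u v.
    by move: e; rewrite /fx /=; case: (eqVneq xr x); rewrite ?eqxx.
  pose f' := fun y => if (y == x) || (f2 y < f2 x)%N then 0%N else 1%N.
  have xA : x \notin A by rewrite inE ltnn.
  have Hs1 : separation (rk f') (rk fh) A [set x].
    apply: (rk_sep (a := x)).
    - apply/setP => w; rewrite !inE /f' /f2 /=; case: (eqVneq w x) => [->|hw]; rewrite ?eqxx /=.
        by rewrite orbT.
      by rewrite orbF; case: ifPn => ?; rewrite /=; lia.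
    - rewrite -setI_eq0; apply/eqP/setP => w; rewrite !inE.
      by case: (eqVneq w x) => [->|]; rewrite ?andbF ?andbT // ltnn.
    - done.
    - by apply/set0Pn; exists x; rewrite inE.
    move=> u v; rewrite !inE /fh /f' /f2 /=.
    case: (eqVneq u x) => [->|hu]; case: (eqVneq v x) => [->|hv];
    rewrite ?eqxx /= ?andbT ?andbF ?orbT ?orbF;
    repeat (case: ifPn => ?); rewrite /=; (try by []); apply/idP/idP; lia.
  have [x' Hx'] := gi f'.
  have [_ _ L3] := local_sm SM Hs1 Hx' Hxh.
  have ex' : x' = x by apply/eqP; rewrite -in_set1; apply: L3; rewrite inE.
  subst x'.
  pose f'' := fun y => if y == x then 0%N else if (f2 y < f2 x)%N then 1%N else 2%N.
  have Hs2 : separation (rk f') (rk f'') [set x] A.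
    apply: (rk_sep (a := x)).
    - apply/setP => w; rewrite !inE /f' /f2 /=; case: (eqVneq w x) => [->|hw]; rewrite ?eqxx /=.
        by [].
      by case: ifPn => ?; rewrite /=; lia.
    - rewrite -setI_eq0; apply/eqP/setP => w; rewrite !inE.
      by case: (eqVneq w x) => [->|]; rewrite ?andbF ?andbT // ltnn.
    - by apply/set0Pn; exists x; rewrite inE.
    - done.
    move=> u v; rewrite !inE /f'' /f' /f2 /=.
    case: (eqVneq u x) => [->|hu]; case: (eqVneq v x) => [->|hv];
    rewrite ?eqxx /= ?andbT ?andbF ?orbT ?orbF;
    repeat (case: ifPn => ?); rewrite /=; (try by []); apply/idP/idP; lia.
  have [x'' Hx''] := gi f''.
  have [_ L2 _] := local_sm SM Hs2 Hx' Hx''.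
  have ex'' : x'' = x by apply/eqP; rewrite -in_set1; apply: L2; rewrite inE.
  subst x''.
  have e : fx xr = fx x.
    apply: (LR fx f'' xr x _ Hxr Hx'').
    move=> u v; rewrite /f'' /fx /f2 /=; crunch x u v.
  by move: e; rewrite /fx /=; case: (eqVneq xr x); rewrite ?eqxx.
subst xr.
pose fg := fun y => if y == x then 0%N else if (fr y <= fr x)%N then 1%N else 2%N.
have [xg Hxg] := gi fg.
have exg : xg = x.
  have e : fx x = fx xg.
    apply: (LR fx fg x xg _ Hxr Hxg).
    move=> u v; rewrite /fg /fx /=; crunch x u v.
  by move: e; rewrite /fx /=; case: (eqVneq xg x); rewrite ?eqxx.
subst xg.
pose fu := fun y => nat_of_bool (~~ (fr y <= fr x)%N).
have [xu Hxu] := gi fu.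
have e1 : fu xu = fu x.
  apply: (LR fu fg xu x _ Hxu Hxg).
  move=> u v; rewrite /fg /fu /=; crunch x u v.
have e2 : fu xu = fu t.
  apply: (LR fu fr xu t _ Hxu Ht).
  move=> u v; rewrite /fu /=; case: (fr u <= fr x)%N / idP; case: (fr v <= fr x)%N / idP => /= ? ? ?; lia.
move: e1 e2; rewrite /fu /= leqnn /= => ->.
by case: (fr t <= fr x)%N.
Qed.

Theorem corollary1 (R : realFieldType) (M : finType)
    (phi : prel M -> {ffun M -> R}) :
  is_mechanism phi -> deterministic phi ->
  (strategyproof phi <-> separation_monotonic phi).
Proof.
move=> Hm Hd; split; first exact: sp_sm.
move=> SM r q Hr Hq.
have [t Ht] := get_ind Hm Hd Hr; have [x Hx] := get_ind Hm Hd Hq.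
apply/(fosd_ind Hr Ht Hx).
move: Ht Hx; rewrite (pref_rank Hr) (pref_rank Hq) rkE => Ht Hx.
exact: (sm_sp_rank Hm Hd SM Ht Hx).
Qed.
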